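(* Let $F:\mathbb{R}^n\to\mathbb{R}^n$ be semilinear, monotone and homogeneous. Then there exists a game graph $\vec{\mathcal{G}}$ with Min vertex set $[n]$ satisfying assumptions (a)–(c) such that $F$ is the operator encoded by $\vec{\mathcal{G}}$.
   Context: Game graph: a directed graph $\vec{\mathcal{G}}=(V,E)$ with $V=V_{\mathrm{Min}}\uplus V_{\mathrm{Rand}}\uplus V_{\mathrm{Max}}$, $V_{\mathrm{Min}}=[n]$ and $V_{\mathrm{Max}}=[m]$ nonempty, every vertex having at least one outgoing edge; $\mathrm{Out}(v)$ is the set of outgoing edges of $v$. Each edge $e$ with Min or Max tail carries a real $r_e$; each edge $e$ with Random tail carries a rational $q_e>0$, summing to $1$ over the outgoing edges of each Random vertex. Assumptions: (a) every path between two Min vertices contains a Max vertex; (b) every path between two Max vertices contains a Min vertex; (c) from every Random vertex there is a path to a Min or Max vertex. In the Markov chain on $V$ where Min and Max vertices are absorbing and a Random vertex $v$ moves to $w$ with probability $q_{(v,w)}$, $p^e_v$ is the probability that the chain started at the head of edge $e$ is absorbed at $v\in V_{\mathrm{Min}}\cup V_{\mathrm{Max}}$. The operator encoded by $\vec{\mathcal{G}}$ is $F_v(x)=\min_{e\in\mathrm{Out}(v)}\big(r_e+\sum_{w\in[m]}p^e_w\max_{e'\in\mathrm{Out}(w)}(r_{e'}+\sum_{u\in[n]}p^{e'}_u x_u)\big)$, $v\in[n]$. Semilinear: graph of $F$ is a finite union of sets $\{z: \langle A_i,z\rangle>b_i,\ \langle A_j,z\rangle=b_j\}$ with rational $A$,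 real $b$. Monotone: $x\le y\Rightarrow F(x)\le F(y)$; homogeneous: $F(\lambda+x)=\lambda+F(x)$ for $\lambda\in\mathbb{R}$. *)

(* Defs.v *)
From Stdlib Require Import Reals Lra List QArith Qreals.
Open Scope R_scope.

(** Vectors of R^n are represented as functions [nat -> R]; only the
    coordinates [i < n] are meaningful. *)

Inductive vtx : Type := VMin (i : nat) | VRand (j : nat) | VMax (j : nat).

Definition vtx_eqb (a b : vtx) : bool :=
  match a, b with
  | VMin i, VMin j => Nat.eqb i j
  | VRand i, VRand j => Nat.eqb i j
  | VMax i, VMax j => Nat.eqb i j
  | _, _ => false
  end.

Definition is_min (v : vtx) : Prop := match v with VMin _ => True | _ => False end.
Definition is_max (v : vtx) : Prop := match v with VMax _ => True | _ => False end.
Definition is_rand (v : vtx) : Prop := match v with VRand _ => True | _ => False end.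

(** A game graph: vertex counts (n Min, nR Random, m Max), the edge set E
    (a duplicate-free list of pairs), real weights [r] (used on edges with
    Min or Max tail) and rational probabilities [q] (used on edges with
    Random tail). *)
Record game := mkGame {
  g_n : nat;
  g_nR : nat;
  g_m : nat;
  g_edges : list (vtx * vtx);
  g_r : vtx * vtx -> R;
  g_q : vtx * vtx -> Q
}.

Definition valid_vtx (G : game) (v : vtx) : Prop :=
  match v with
  | VMin i => (i < g_n G)%nat
  | VRand j => (j < g_nR G)%nat
  | VMax j => (j < g_m G)%nat
  end.

Definition out (G : game) (v : vtx) : list (vtx * vtx) :=
  filter (fun e => vtx_eqb (fst e) v) (g_edges G).

Definition sumR (l : list R) : R := fold_right Rplus 0 l.
Definition sumQ (l : list Q) : Q := fold_right Qplus 0%Q l.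
Definition sum_range (k : nat) (f : nat -> R) : R := sumR (map f (seq 0 k)).

Definition minl (l : list R) : R :=
  match l with nil => 0 | a :: t => fold_right Rmin a t end.
Definition maxl (l : list R) : R :=
  match l with nil => 0 | a :: t => fold_right Rmax a t end.

Fixpoint walk (G : game) (v : vtx) (l : list vtx) : Prop :=
  match l with
  | nil => True
  | w :: l' => In (v, w) (g_edges G) /\ walk G w l'
  end.

Definition game_ok (G : game) : Prop :=
  (0 < g_n G)%nat /\ (0 < g_m G)%nat /\
  NoDup (g_edges G) /\
  (forall e, In e (g_edges G) -> valid_vtx G (fst e) /\ valid_vtx G (snd e)) /\
  (forall v, valid_vtx G v -> out G v <> nil) /\
  (forall e, In e (g_edges G) -> is_rand (fst e) -> Qlt 0 (g_q G e)) /\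
  (forall j, (j < g_nR G)%nat ->
     Qeq (sumQ (map (g_q G) (out G (VRand j)))) 1) /\
  (* (a) every path between two Min vertices contains a Max vertex *)
  (forall u l, is_min u -> walk G u l -> l <> nil -> is_min (last l u) ->
     exists x, In x l /\ is_max x) /\
  (* (b) every path between two Max vertices contains a Min vertex *)
  (forall u l, is_max u -> walk G u l -> l <> nil -> is_max (last l u) ->
     exists x, In x l /\ is_min x) /\
  (* (c) from every Random vertex there is a path to a Min or Max vertex *)
  (forall j, (j < g_nR G)%nat -> exists l, walk G (VRand j) l /\
     (is_min (last l (VRand j)) \/ is_max (last l (VRand j)))).

(** Markov chain on V: Min and Max vertices are absorbing, a Random vertex
    v moves to w with probability q_(v,w).  [nstep G k s t] is the
    probability to be at t after k steps when starting at s. *)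
Fixpoint nstep (G : game) (k : nat) (s t : vtx) : R :=
  match k with
  | O => if vtx_eqb s t then 1 else 0
  | S k' =>
      match s with
      | VRand _ => sumR (map (fun e => Q2R (g_q G e) * nstep G k' (snd e) t) (out G s))
      | _ => if vtx_eqb s t then 1 else 0
      end
  end.

(** [p] gives the absorption probabilities: for every edge e = (v,h) and
    every absorbing vertex t, p h t = lim_k P^k(h,t) = probability that the
    chain started at the head h of e is absorbed at t. *)
Definition absorption_probs (G : game) (p : vtx -> vtx -> R) : Prop :=
  forall e t, In e (g_edges G) -> valid_vtx G t -> (is_min t \/ is_max t) ->
    Un_cv (fun k => nstep G k (snd e) t) (p (snd e) t).

Definition encoded_op (G : game) (p : vtx -> vtx -> R) (x : nat -> R) (v : nat) : R :=
  minl (map (fun e =>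
     g_r G e + sum_range (g_m G) (fun w =>
        p (snd e) (VMax w) *
        maxl (map (fun e' =>
                g_r G e' + sum_range (g_n G) (fun u => p (snd e') (VMin u) * x u))
             (out G (VMax w)))))
   (out G (VMin v))).

(** F is a well-defined map R^n -> R^n: its first n output coordinates
    depend only on the first n input coordinates. *)
Definition is_map_Rn (n : nat) (F : (nat -> R) -> (nat -> R)) : Prop :=
  forall x y, (forall i, (i < n)%nat -> x i = y i) ->
    forall i, (i < n)%nat -> F x i = F y i.

Definition monotone (n : nat) (F : (nat -> R) -> (nat -> R)) : Prop :=
  forall x y, (forall i, (i < n)%nat -> x i <= y i) ->
    forall i, (i < n)%nat -> F x i <= F y i.

Definition homogeneous (n : nat) (F : (nat -> R) -> (nat -> R)) : Prop :=
  forall (lam : R) x i, (i < n)%nat -> F (fun j => lam + x j) i = lam + F x i.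

(** A linear constraint on z = (x, y) in R^n x R^n = R^{2n}:
    <A, z> > b  (strict = true)  or  <A, z> = b  (strict = false),
    with A rational and b real. *)
Record constr := mkConstr { c_A : nat -> Q; c_b : R; c_strict : bool }.

Definition dotz (n : nat) (A : nat -> Q) (x y : nat -> R) : R :=
  sum_range n (fun i => Q2R (A i) * x i) + sum_range n (fun i => Q2R (A (n + i)%nat) * y i).

Definition sat_constr (n : nat) (c : constr) (x y : nat -> R) : Prop :=
  if c_strict c then dotz n (c_A c) x y > c_b c else dotz n (c_A c) x y = c_b c.

Definition semilinear (n : nat) (F : (nat -> R) -> (nat -> R)) : Prop :=
  exists S : list (list constr),
    forall x y : nat -> R,
      (forall i, (i < n)%nat -> y i = F x i) <->
      exists C, In C S /\ forall c, In c C -> sat_constr n c x y.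

(* Main.v *)
Require Import Defs.
From Stdlib Require Import Reals List QArith Qreals.
From Stdlib Require Import Lra Lia Permutation ClassicalEpsilon Classical.
From Stdlib Require IndefiniteDescription.
Open Scope R_scope.


Lemma sumR_app l1 l2 : sumR (l1 ++ l2) = sumR l1 + sumR l2.
Proof. induction l1; simpl; [lra|rewrite IHl1; lra]. Qed.

Lemma sum_range_0 f : sum_range 0 f = 0.
Proof. reflexivity. Qed.

Lemma sum_range_S k f : sum_range (S k) f = sum_range k f + f k.
Proof. unfold sum_range. rewrite seq_S, map_app, sumR_app. simpl. lra. Qed.

Lemma sum_range_ext k f g : (forall i, (i < k)%nat -> f i = g i) -> sum_range k f = sum_range k g.
Proof. induction k; intros H; [reflexivity|]. rewrite !sum_range_S, IHk, H; auto. Qed.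

Lemma sum_range_plus k f g : sum_range k (fun i => f i + g i) = sum_range k f + sum_range k g.
Proof. induction k; [simpl; unfold sum_range; simpl; lra|]. rewrite !sum_range_S, IHk. lra. Qed.

Lemma sum_range_scal k c f : sum_range k (fun i => c * f i) = c * sum_range k f.
Proof. induction k; [unfold sum_range; simpl; lra|]. rewrite !sum_range_S, IHk. lra. Qed.

Lemma sum_range_minus k f g : sum_range k (fun i => f i - g i) = sum_range k f - sum_range k g.
Proof. induction k; [unfold sum_range; simpl; lra|]. rewrite !sum_range_S, IHk. lra. Qed.

Lemma sum_range_zero k f : (forall i, (i < k)%nat -> f i = 0) -> sum_range k f = 0.
Proof. intros H. rewrite (sum_range_ext k f (fun _ => 0)); auto.
  induction k; [reflexivity|]. rewrite sum_range_S, IHk; auto. lra. Qed.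

Lemma sum_range_delta k u f : (u < k)%nat ->
  sum_range k (fun i => (if Nat.eqb i u then 1 else 0) * f i) = f u.
Proof. induction k; intros H; [lia|]. rewrite sum_range_S.
  destruct (Nat.eq_dec u k) as [->|Hne].
  - rewrite Nat.eqb_refl. rewrite sum_range_zero; [lra|].
    intros i Hi. destruct (Nat.eqb_spec i k); [lia|lra].
  - rewrite IHk by lia. destruct (Nat.eqb_spec k u); [lia|lra]. Qed.

Lemma sum_range_delta' k u f : (u < k)%nat ->
  sum_range k (fun i => f i * (if Nat.eqb u i then 1 else 0)) = f u.
Proof. intros H. rewrite <- (sum_range_delta k u f H). apply sum_range_ext.
  intros i _. destruct (Nat.eqb_spec u i), (Nat.eqb_spec i u); subst; try lia; lra. Qed.

Lemma sum_range_le k f g : (forall i, (i < k)%nat -> f i <= g i) -> sum_range k f <= sum_range k g.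
Proof. induction k; intros H; [unfold sum_range; simpl; lra|]. rewrite !sum_range_S.
  assert (sum_range k f <= sum_range k g) by (apply IHk; auto). specialize (H k ltac:(lia)). lra. Qed.

Lemma sum_range_abs k f : Rabs (sum_range k f) <= sum_range k (fun i => Rabs (f i)).
Proof. induction k; [unfold sum_range; simpl; rewrite Rabs_R0; lra|]. rewrite !sum_range_S.
  eapply Rle_trans; [apply Rabs_triang|]. lra. Qed.

Lemma sum_range_nonneg k f : (forall i, (i < k)%nat -> 0 <= f i) -> 0 <= sum_range k f.
Proof. intros H. apply Rle_trans with (sum_range k (fun _ => 0)).
  - rewrite sum_range_zero by auto. lra.
  - apply sum_range_le; auto. Qed.

Lemma sum_range_exch k m f : sum_range k (fun i => sum_range m (fun j => f i j)) =
  sum_range m (fun j => sum_range k (fun i => f i j)).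
Proof. induction k.
  - rewrite sum_range_0, sum_range_zero; auto.
  - rewrite sum_range_S, IHk, <- sum_range_plus. apply sum_range_ext. intros. rewrite sum_range_S. lra. Qed.

Lemma sum_lip k (a x y : nat -> R) d : (forall i, (i < k)%nat -> Rabs (x i - y i) <= d) ->
  Rabs (sum_range k (fun i => a i * x i) - sum_range k (fun i => a i * y i))
   <= sum_range k (fun i => Rabs (a i)) * d.
Proof. intros H. rewrite <- sum_range_minus. eapply Rle_trans; [apply sum_range_abs|].
  rewrite Rmult_comm, <- sum_range_scal. apply sum_range_le. intros i Hi.
  replace (a i * x i - a i * y i) with (a i * (x i - y i)) by ring. rewrite Rabs_mult.
  specialize (H i Hi). pose proof (Rabs_pos (a i)). nra. Qed.

Lemma sumR_perm l l' : Permutation l l' -> sumR l = sumR l'.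
Proof. induction 1; simpl; lra. Qed.

Lemma sumQ_Q2R {A} (f : A -> Q) l : Q2R (sumQ (map f l)) = sumR (map (fun a => Q2R (f a)) l).
Proof. induction l; simpl. - unfold Q2R; simpl; lra. - rewrite Q2R_plus, IHl. reflexivity. Qed.

Lemma fin_eps {A} (l : list A) (P : A -> R -> Prop) :
  (forall a e e', P a e -> 0 < e' <= e -> P a e') ->
  (forall a, In a l -> exists e, 0 < e /\ P a e) ->
  exists e, 0 < e /\ forall a, In a l -> P a e.
Proof. intros Hd. induction l as [|a l IH]; intros H.
  - exists 1. split; [lra|]. intros a []. 
  - destruct (H a (or_introl eq_refl)) as [e1 [He1 P1]].
    destruct IH as [e2 [He2 P2]]. { intros b Hb. apply H. right; auto. }
    exists (Rmin e1 e2). split. { apply Rmin_glb_lt; auto. }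
    intros b [<-|Hb].
    + eapply Hd; eauto. split; [apply Rmin_glb_lt; auto| apply Rmin_l].
    + eapply Hd; eauto. split; [apply Rmin_glb_lt; auto| apply Rmin_r]. Qed.

Lemma minl_le l y : In y l -> minl l <= y.
Proof. destruct l as [|a t]; [intros []|]. simpl. intros H.
  assert (G: forall t', fold_right Rmin a t' <= a /\ forall y, In y t' -> fold_right Rmin a t' <= y).
  { intros t'; induction t' as [|b t0 IH]; simpl; split; [lra|intros _ []| |].
    - destruct IH. eapply Rle_trans; [apply Rmin_r|]; auto.
    - intros z [<-|Hz]; [apply Rmin_l|]. destruct IH as [_ IH]. eapply Rle_trans; [apply Rmin_r|]; auto. }
  destruct H as [<-|H]; [apply (proj1 (G t))|apply (proj2 (G t)); auto]. Qed.

Lemma minl_in l : l <> nil -> In (minl l) l.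
Proof. destruct l as [|a t]; [congruence|]. intros _. unfold minl.
  induction t as [|b t IH]; [left; reflexivity|].
  simpl fold_right. destruct (Rle_dec b (fold_right Rmin a t)).
  - rewrite Rmin_left by auto. right; left; auto.
  - rewrite Rmin_right by lra. destruct IH as [H|H]; [left; auto| right; right; auto]. Qed.

Lemma maxl_ge l y : In y l -> y <= maxl l.
Proof. destruct l as [|a t]; [intros []|]. simpl. intros H.
  assert (G: forall t', a <= fold_right Rmax a t' /\ forall y, In y t' -> y <= fold_right Rmax a t').
  { intros t'; induction t' as [|b t0 IH]; simpl; split; [lra|intros _ []| |].
    - destruct IH. eapply Rle_trans; [|apply Rmax_r]; auto.
    - intros z [<-|Hz]; [apply Rmax_l|]. destruct IH as [_ IH]. eapply Rle_trans; [|apply Rmax_r]; auto. }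
  destruct H as [<-|H]; [apply (proj1 (G t))|apply (proj2 (G t)); auto]. Qed.

Lemma maxl_in l : l <> nil -> In (maxl l) l.
Proof. destruct l as [|a t]; [congruence|]. intros _. unfold maxl.
  induction t as [|b t IH]; [left; reflexivity|].
  simpl fold_right. destruct (Rle_dec b (fold_right Rmax a t)).
  - rewrite Rmax_right by auto. destruct IH as [H|H]; [left; auto| right; right; auto].
  - rewrite Rmax_left by lra. right; left; auto. Qed.


Lemma oneD (h : R -> R) (K : R) (L : list (R*R)) :
  0 <= K ->
  (forall s t, Rabs (h s - h t) <= K * Rabs (s - t)) ->
  (forall t, 0 <= t <= 1 -> exists ab, In ab L /\ h t = fst ab + snd ab * t) ->
  exists ab, In ab L /\ fst ab <= h 0 /\ fst ab + snd ab >= h 1.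
Proof.
  intros HK Hlip Hsel.
  apply NNPP. intros Hno.
  assert (H : forall ab, In ab L -> fst ab <= h 0 -> fst ab + snd ab < h 1).
  { intros ab Hab Hle. apply Rnot_le_lt. intros Hc. apply Hno. exists ab. repeat split; auto; lra. }
  clear Hno.
  assert (Hcont : forall ab s t, Rabs ((h s - (fst ab + snd ab * s)) - (h t - (fst ab + snd ab * t)))
             <= (K + Rabs (snd ab)) * Rabs (s - t)).
  { intros ab s t. replace ((h s - (fst ab + snd ab * s)) - (h t - (fst ab + snd ab * t)))
      with ((h s - h t) + (- (snd ab * (s - t)))) by ring.
    eapply Rle_trans; [apply Rabs_triang|]. rewrite Rabs_Ropp, Rabs_mult.
    specialize (Hlip s t). lra. }
  set (E := fun t => 0 <= t <= 1 /\ exists ab, In ab L /\ fst ab <= h 0 /\ fst ab + snd ab * t >= h t).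
  assert (HE0 : E 0).
  { destruct (Hsel 0 ltac:(lra)) as [ab [Hab Hh]]. split; [lra|]. exists ab.
    rewrite Rmult_0_r, Rplus_0_r in *. repeat split; auto; lra. }
  destruct (completeness E) as [t0 [Hub Hlub]].
  { exists 1. intros t [Ht _]. lra. }
  { exists 0; auto. }
  assert (Ht0a : 0 <= t0) by (apply Hub; auto).
  assert (Ht0b : t0 <= 1) by (apply Hlub; intros t [Ht _]; lra).
  assert (HEt0 : E t0).
  { apply NNPP. intros HnE.
    assert (Hall : forall ab, In ab L -> fst ab <= h 0 -> fst ab + snd ab * t0 < h t0).
    { intros ab Hab Hle. apply Rnot_le_lt. intros Hc. apply HnE. split; [lra|]. exists ab; repeat split; auto; lra. }
    destruct (fin_eps L (fun ab d => fst ab <= h 0 -> forall t, t0 - d < t <= t0 -> fst ab + snd ab * t < h t))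
      as [d [Hd Hdp]].
    { intros ab e e' He [He' Hee] Hle t Ht. apply He; auto. lra. }
    { intros ab Hab. destruct (Rle_dec (fst ab) (h 0)) as [Hle|Hnle]; [|exists 1; split; [lra|]; intros; lra].
      specialize (Hall ab Hab Hle). set (m := h t0 - (fst ab + snd ab * t0)).
      exists (m / (K + Rabs (snd ab) + 1)). pose proof (Rabs_pos (snd ab)).
      split. { unfold m. apply Rdiv_lt_0_compat; lra. }
      intros _ t Ht. specialize (Hcont ab t t0).
      assert (Rabs (t - t0) < m / (K + Rabs (snd ab) + 1)).
      { rewrite Rabs_left1 by lra. lra. }
      assert ((K + Rabs (snd ab)) * Rabs (t - t0) < m).
      { apply Rle_lt_trans with ((K + Rabs (snd ab) + 1) * Rabs (t - t0)).
        - pose proof (Rabs_pos (t - t0)). nra.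
        - apply Rlt_le_trans with ((K + Rabs (snd ab) + 1) * (m / (K + Rabs (snd ab) + 1))).
          + apply Rmult_lt_compat_l; lra.
          + right. field. lra. }
      assert (Hx := Rle_abs (- ((h t - (fst ab + snd ab * t)) - (h t0 - (fst ab + snd ab * t0))))).
      rewrite Rabs_Ropp in Hx. unfold m in *. lra. }
    assert (Hnot : ~ is_upper_bound E (t0 - d)).
    { intros Hb. specialize (Hlub _ Hb). lra. }
    apply Hnot. intros e He. apply Rnot_lt_le. intros Hlt.
    assert (e <= t0) by (apply Hub; auto).
    destruct He as [_ [ab [Hab [Hle Hge]]]].
    specialize (Hdp ab Hab Hle e ltac:(lra)). lra. }
  destruct HEt0 as [_ [abs [Habs [Hles Hges]]]].
  assert (Ht0 : t0 < 1).
  { destruct (Rle_lt_or_eq_dec _ _ Ht0b) as [? | ->]; auto. specialize (H abs Habs Hles).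
    rewrite Rmult_1_r in Hges. lra. }
  assert (Hright : forall t, t0 < t <= 1 -> forall ab, In ab L -> fst ab <= h 0 -> fst ab + snd ab * t < h t).
  { intros t Ht ab Hab Hle. apply Rnot_le_lt. intros Hc.
    assert (E t) by (split; [lra|]; exists ab; repeat split; auto; lra).
    specialize (Hub t H0). lra. }
  destruct (fin_eps L (fun ab d => forall t, t0 < t < t0 + d -> t <= 1 -> h t <> fst ab + snd ab * t))
    as [d [Hd Hdp]].
  { intros ab e e' He [He' Hee] t Ht Ht1. apply He; auto. lra. }
  { intros ab Hab. destruct (Rle_dec (fst ab) (h 0)) as [Hle|Hnle].
    - exists 1. split; [lra|]. intros t Ht Ht1. specialize (Hright t ltac:(lra) ab Hab Hle). lra.
    - destruct (Req_dec (fst ab + snd ab * t0) (h t0)) as [Heq|Hneq].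
      + exists 1. split; [lra|]. intros t Ht Ht1.
        assert (Ht0p : 0 < t0).
        { destruct (Rle_lt_or_eq_dec _ _ Ht0a) as [? | <-]; auto. rewrite Rmult_0_r, Rplus_0_r in Heq. lra. }
        specialize (Hright t ltac:(lra) abs Habs Hles).
        assert (fst ab + snd ab * t < fst abs + snd abs * t).
        { assert (Hsl : (snd ab - snd abs) * t0 < 0) by nra.
          assert (snd ab - snd abs < 0).
          { apply Rnot_le_lt. intro. assert (0 <= (snd ab - snd abs) * t0) by nra. lra. }
          nra. }
        lra.
      + set (m := Rabs (h t0 - (fst ab + snd ab * t0))).
        assert (Hm : 0 < m) by (apply Rabs_pos_lt; lra).
        exists (m / (K + Rabs (snd ab) + 1)). pose proof (Rabs_pos (snd ab)).
        split. { apply Rdiv_lt_0_compat; lra. }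
        intros t Ht Ht1 Heq. specialize (Hcont ab t t0).
        assert (Rabs (t - t0) < m / (K + Rabs (snd ab) + 1)).
        { rewrite Rabs_right by lra. lra. }
        assert ((K + Rabs (snd ab)) * Rabs (t - t0) < m).
        { apply Rle_lt_trans with ((K + Rabs (snd ab) + 1) * Rabs (t - t0)).
          - pose proof (Rabs_pos (t - t0)). nra.
          - apply Rlt_le_trans with ((K + Rabs (snd ab) + 1) * (m / (K + Rabs (snd ab) + 1))).
            + apply Rmult_lt_compat_l; lra.
            + right. field. lra. }
        rewrite Heq in Hcont. replace (fst ab + snd ab * t - (fst ab + snd ab * t)) with 0 in Hcont by ring.
        rewrite Rminus_0_l, Rabs_Ropp in Hcont. unfold m in *. lra. }
  set (t := t0 + Rmin d (1 - t0) / 2).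
  assert (Hm1 : 0 < Rmin d (1 - t0)) by (apply Rmin_glb_lt; lra).
  assert (Hm2 := Rmin_l d (1 - t0)). assert (Hm3 := Rmin_r d (1 - t0)).
  destruct (Hsel t ltac:(unfold t; lra)) as [ab [Hab Hh]].
  apply (Hdp ab Hab t); unfold t in *; try lra. Qed.


Lemma Q2R_elim a c d e : ~ (e == 0)%Q -> Q2R (a - c * d / e) = Q2R a - Q2R c * Q2R d / Q2R e.
Proof. intros He. rewrite Q2R_minus, Q2R_div, Q2R_mult by auto. reflexivity. Qed.

Lemma Q2R_0 : Q2R 0 = 0.
Proof. unfold Q2R; simpl; lra. Qed.

Lemma rat_sol (N : nat) : forall (eqs : list ((nat -> Q) * Q)) (w : nat -> R),
  (forall e, In e eqs -> sum_range N (fun i => Q2R (fst e i) * w i) = Q2R (snd e)) ->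
  exists wq : nat -> Q, forall e, In e eqs ->
    sum_range N (fun i => Q2R (fst e i) * Q2R (wq i)) = Q2R (snd e).
Proof.
  induction N as [|N IH]; intros eqs w Hw.
  - exists (fun _ => 0%Q). intros e He. rewrite <- (Hw e He). reflexivity.
  - destruct (classic (exists e0, In e0 eqs /\ ~ (fst e0 N == 0)%Q)) as [[[a0 b0] [He0 Ha0]]|Hnone].
    + simpl in Ha0.
      set (tr := fun e : (nat -> Q) * Q => ((fun i => fst e i - fst e N * a0 i / a0 N)%Q,
                                              (snd e - fst e N * b0 / a0 N)%Q)).
      destruct (IH (map tr eqs) w) as [wq Hwq].
      { intros e' He'. apply in_map_iff in He' as [e [<- He]]. unfold tr; simpl.
        rewrite Q2R_elim by auto.
        erewrite sum_range_ext; [|intros i _; rewrite Q2R_elim by auto; reflexivity].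
        pose proof (Hw e He) as H1. pose proof (Hw _ He0) as H2. simpl in H2.
        rewrite sum_range_S in H1, H2.
        rewrite (sum_range_ext N _ (fun i => Q2R (fst e i) * w i - (Q2R (fst e N) / Q2R (a0 N)) * (Q2R (a0 i) * w i))).
        2:{ intros i _. field. intro Hc. apply Ha0. apply eqR_Qeq. rewrite Hc, Q2R_0. reflexivity. }
        rewrite sum_range_minus, sum_range_scal.
        assert (Hnz : Q2R (a0 N) <> 0). { intro Hc. apply Ha0. apply eqR_Qeq. rewrite Hc, Q2R_0. reflexivity. }
        assert (H1' : sum_range N (fun i => Q2R (fst e i) * w i) = Q2R (snd e) - Q2R (fst e N) * w N) by lra.
        assert (H2' : sum_range N (fun i => Q2R (a0 i) * w i) = Q2R b0 - Q2R (a0 N) * w N) by lra.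
        rewrite H1', H2'. field. auto. }
      set (s0 := sumQ (map (fun i => a0 i * wq i)%Q (seq 0 N))).
      exists (fun i => if Nat.eqb i N then ((b0 - s0) / a0 N)%Q else wq i).
      intros e He. rewrite sum_range_S, Nat.eqb_refl.
      rewrite (sum_range_ext N _ (fun i => Q2R (fst e i) * Q2R (wq i))).
      2:{ intros i Hi. destruct (Nat.eqb_spec i N); [lia|reflexivity]. }
      assert (Hnz : Q2R (a0 N) <> 0). { intro Hc. apply Ha0. apply eqR_Qeq. rewrite Hc, Q2R_0. reflexivity. }
      assert (Hs0 : Q2R s0 = sum_range N (fun i => Q2R (a0 i) * Q2R (wq i))).
      { unfold s0. rewrite sumQ_Q2R. unfold sum_range. f_equal. apply map_ext. intros. apply Q2R_mult. }
      rewrite Q2R_div, Q2R_minus, Hs0 by auto.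
      specialize (Hwq (tr e) (in_map _ _ _ He)). unfold tr in Hwq; simpl in Hwq.
      rewrite Q2R_elim in Hwq by auto.
      erewrite sum_range_ext in Hwq; [|intros i _; rewrite Q2R_elim by auto; reflexivity].
      rewrite (sum_range_ext N _ (fun i => Q2R (fst e i) * Q2R (wq i) - (Q2R (fst e N) / Q2R (a0 N)) * (Q2R (a0 i) * Q2R (wq i)))) in Hwq.
      2:{ intros i _. field. auto. }
      rewrite sum_range_minus, sum_range_scal in Hwq.
      apply (Rplus_eq_reg_r (- (Q2R (fst e N) / Q2R (a0 N) * sum_range N (fun i : nat => Q2R (a0 i) * Q2R (wq i))))).
      replace (Q2R (snd e) + - (Q2R (fst e N) / Q2R (a0 N) * sum_range N (fun i : nat => Q2R (a0 i) * Q2R (wq i))))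
        with (Q2R (snd e) - Q2R (fst e N) * Q2R b0 / Q2R (a0 N)
              + (Q2R (fst e N) * Q2R b0 / Q2R (a0 N) - (Q2R (fst e N) / Q2R (a0 N) * sum_range N (fun i : nat => Q2R (a0 i) * Q2R (wq i)))))
        by ring.
      rewrite <- Hwq. field. auto.
    + assert (Hz : forall e, In e eqs -> Q2R (fst e N) = 0).
      { intros e He. apply NNPP. intro Hc. apply Hnone. exists e. split; auto. intro Hq.
        apply Hc. rewrite (Qeq_eqR _ _ Hq). apply Q2R_0. }
      destruct (IH eqs w) as [wq Hwq].
      { intros e He. rewrite <- (Hw e He), sum_range_S, (Hz e He). ring. }
      exists wq. intros e He. rewrite sum_range_S, (Hz e He), Hwq by auto. ring.
Qed.


Definition ball (n : nat) (x0 : nat -> R) (r : R) (x : nat -> R) : Prop :=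
  forall u, (u < n)%nat -> Rabs (x u - x0 u) < r.

Lemma ball_center n x0 r : 0 < r -> ball n x0 r x0.
Proof. intros Hr u _. rewrite Rminus_diag, Rabs_R0. auto. Qed.

Lemma F_lip n F : monotone n F -> homogeneous n F ->
  forall x y d, (forall u, (u < n)%nat -> Rabs (x u - y u) <= d) ->
  forall v, (v < n)%nat -> Rabs (F x v - F y v) <= d.
Proof. intros Hm Hh x y d Hd v Hv.
  assert (H1 : F x v <= d + F y v).
  { rewrite <- (Hh d y v Hv). apply Hm; auto. intros i Hi. specialize (Hd i Hi).
    pose proof (Rle_abs (x i - y i)). lra. }
  assert (H2 : F y v <= d + F x v).
  { rewrite <- (Hh d x v Hv). apply Hm; auto. intros i Hi. specialize (Hd i Hi).
    rewrite Rabs_minus_sym in Hd. pose proof (Rle_abs (y i - x i)). lra. }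
  apply Rabs_le. lra. Qed.

Lemma dotz_ext n A x y x' y' : (forall i, (i < n)%nat -> x i = x' i) -> (forall i, (i < n)%nat -> y i = y' i) ->
  dotz n A x y = dotz n A x' y'.
Proof. intros H1 H2. unfold dotz. f_equal; apply sum_range_ext; intros i Hi; rewrite ?H1, ?H2; auto. Qed.

Lemma dotz_lin n A a b x y x' y' :
  dotz n A (fun i => a * x i + b * x' i) (fun i => a * y i + b * y' i) = a * dotz n A x y + b * dotz n A x' y'.
Proof. unfold dotz.
  rewrite (sum_range_ext n _ (fun i => a * (Q2R (A i) * x i) + b * (Q2R (A i) * x' i))) by (intros; ring).
  rewrite (sum_range_ext n (fun i => Q2R (A (n + i)%nat) * _) (fun i => a * (Q2R (A (n+i)%nat) * y i) + b * (Q2R (A (n+i)%nat) * y' i))) by (intros; ring).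
  rewrite !sum_range_plus, !sum_range_scal. ring. Qed.

Lemma dotz_add n A x y s w : dotz n A (fun i => x i + s i) (fun i => y i + w i) = dotz n A x y + dotz n A s w.
Proof. transitivity (1 * dotz n A x y + 1 * dotz n A s w); [|ring].
  rewrite <- dotz_lin. apply dotz_ext; intros; ring. Qed.

Lemma dotz_scal n A t s w : dotz n A (fun i => t * s i) (fun i => t * w i) = t * dotz n A s w.
Proof. transitivity (t * dotz n A s w + 0 * dotz n A s w); [|ring].
  rewrite <- dotz_lin. apply dotz_ext; intros; ring. Qed.

Lemma dotz_sub n A x y x' y' : dotz n A x y - dotz n A x' y' = dotz n A (fun i => x i - x' i) (fun i => y i - y' i).
Proof. replace (dotz n A x y - dotz n A x' y') with (1 * dotz n A x y + (-1) * dotz n A x' y') by ring.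
  rewrite <- dotz_lin. apply dotz_ext; intros; ring. Qed.

Definition LA (n : nat) (A : nat -> Q) : R :=
  sum_range n (fun i => Rabs (Q2R (A i))) + sum_range n (fun i => Rabs (Q2R (A (n + i)%nat))).

Lemma LA_nonneg n A : 0 <= LA n A.
Proof. unfold LA. pose proof (sum_range_nonneg n (fun i => Rabs (Q2R (A i))) ltac:(intros; apply Rabs_pos)).
  pose proof (sum_range_nonneg n (fun i => Rabs (Q2R (A (n+i)%nat))) ltac:(intros; apply Rabs_pos)). lra. Qed.

Lemma dotz_lip n A x y x' y' d :
  (forall i, (i < n)%nat -> Rabs (x i - x' i) <= d) -> (forall i, (i < n)%nat -> Rabs (y i - y' i) <= d) ->
  Rabs (dotz n A x y - dotz n A x' y') <= LA n A * d.
Proof. intros H1 H2. unfold dotz, LA.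
  pose proof (sum_lip n (fun i => Q2R (A i)) x x' d H1).
  pose proof (sum_lip n (fun i => Q2R (A (n+i)%nat)) y y' d H2).
  replace (sum_range n (fun i : nat => Q2R (A i) * x i) + sum_range n (fun i : nat => Q2R (A (n + i)%nat) * y i) -
   (sum_range n (fun i : nat => Q2R (A i) * x' i) + sum_range n (fun i : nat => Q2R (A (n + i)%nat) * y' i)))
  with ((sum_range n (fun i : nat => Q2R (A i) * x i) - sum_range n (fun i : nat => Q2R (A i) * x' i)) +
        (sum_range n (fun i : nat => Q2R (A (n + i)%nat) * y i) - sum_range n (fun i : nat => Q2R (A (n + i)%nat) * y' i))) by ring.
  eapply Rle_trans; [apply Rabs_triang|]. lra. Qed.

Definition phi n F (c : constr) (x : nat -> R) : R := dotz n (c_A c) x (F x) - c_b c.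

Lemma phi_lip n F c x x' d : monotone n F -> homogeneous n F -> 0 <= d ->
  (forall i, (i < n)%nat -> Rabs (x i - x' i) <= d) -> Rabs (phi n F c x - phi n F c x') <= LA n (c_A c) * d.
Proof. intros Hm Hh Hd H. unfold phi.
  replace (dotz n (c_A c) x (F x) - c_b c - (dotz n (c_A c) x' (F x') - c_b c))
    with (dotz n (c_A c) x (F x) - dotz n (c_A c) x' (F x')) by ring.
  apply dotz_lip; auto. intros i Hi. apply (F_lip n F Hm Hh x x' d H i Hi). Qed.

Definition SC n F c x1 r1 : Prop :=
  (forall x, ball n x1 r1 x -> phi n F c x > 0) \/ (forall x, ball n x1 r1 x -> phi n F c x < 0) \/
  (forall x, ball n x1 r1 x -> phi n F c x = 0).

Lemma SC_sub n F c x1 r1 x2 r2 : (forall x, ball n x2 r2 x -> ball n x1 r1 x) -> SC n F c x1 r1 -> SC n F c x2 r2.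
Proof. intros Hs [H|[H|H]]; [left|right;left|right;right]; intros; apply H; auto. Qed.

Lemma ball_in_ball n x0 r x' : ball n x0 r x' -> exists e, 0 < e /\ forall x, ball n x' e x -> ball n x0 r x.
Proof. intros Hx.
  destruct (fin_eps (seq 0 n) (fun u e => (u < n)%nat -> Rabs (x' u - x0 u) + e <= r)) as [e [He Hp]].
  { intros u e e' H [H1 H2] Hu. specialize (H Hu). lra. }
  { intros u Hu. apply in_seq in Hu. exists (r - Rabs (x' u - x0 u)). specialize (Hx u ltac:(lia)). split; [lra|]. intros; lra. }
  exists e. split; auto. intros x Hb u Hu. specialize (Hb u Hu). specialize (Hp u ltac:(apply in_seq; lia) Hu).
  replace (x u - x0 u) with ((x u - x' u) + (x' u - x0 u)) by ring.
  eapply Rle_lt_trans; [apply Rabs_triang|]. lra. Qed.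

Lemma shrink n F : monotone n F -> homogeneous n F -> forall cs x0 r, 0 < r ->
  exists x1 r1, 0 < r1 /\ (forall x, ball n x1 r1 x -> ball n x0 r x) /\ forall c, In c cs -> SC n F c x1 r1.
Proof. intros Hm Hh cs. induction cs as [|c cs IH]; intros x0 r Hr.
  - exists x0, r. repeat split; auto. intros c [].
  - destruct (classic (forall x, ball n x0 r x -> phi n F c x = 0)) as [Hz|Hnz].
    + destruct (IH x0 r Hr) as [x1 [r1 [Hr1 [Hs Hc]]]]. exists x1, r1. repeat split; auto.
      intros c' [Heq|Hc']; [subst c'|auto]. apply (SC_sub n F c x0 r); auto. right; right; auto.
    + apply not_all_ex_not in Hnz as [x' Hx']. apply imply_to_and in Hx' as [Hb Hne].
      destruct (ball_in_ball n x0 r x' Hb) as [e [He Hsub]].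
      set (m := Rabs (phi n F c x')). assert (Hm0 : 0 < m) by (apply Rabs_pos_lt; auto).
      pose proof (LA_nonneg n (c_A c)).
      set (r' := Rmin e (m / (LA n (c_A c) + 1))).
      assert (Hr' : 0 < r') by (apply Rmin_glb_lt; auto; apply Rdiv_lt_0_compat; lra).
      assert (Hsign : SC n F c x' r').
      { assert (Hcl : forall x, ball n x' r' x -> Rabs (phi n F c x - phi n F c x') < m).
        { intros x Hx. eapply Rle_lt_trans. apply (phi_lip n F c x x' r'); auto; try lra.
          intros i Hi; left; apply Hx; auto.
          apply Rle_lt_trans with (LA n (c_A c) * (m / (LA n (c_A c) + 1))).
          - apply Rmult_le_compat_l; auto. apply Rmin_r.
          - apply Rlt_le_trans with ((LA n (c_A c) + 1) * (m / (LA n (c_A c) + 1))).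
            + apply Rmult_lt_compat_r; [apply Rdiv_lt_0_compat|]; lra.
            + right; field; lra. }
        destruct (Rlt_le_dec 0 (phi n F c x')) as [Hp|Hp].
        - left. intros x Hx. specialize (Hcl x Hx). unfold m in Hcl. rewrite (Rabs_right (phi n F c x')) in Hcl by lra.
          pose proof (Rle_abs (phi n F c x' - phi n F c x)). rewrite Rabs_minus_sym in Hcl. lra.
        - right; left. intros x Hx. specialize (Hcl x Hx). unfold m in Hcl. rewrite (Rabs_left1 (phi n F c x')) in Hcl by lra.
          pose proof (Rle_abs (phi n F c x - phi n F c x')). lra. }
      destruct (IH x' r' Hr') as [x1 [r1 [Hr1 [Hs Hc]]]]. exists x1, r1. repeat split; auto.
      * intros x Hx. apply Hsub. intros u Hu. eapply Rlt_le_trans; [apply (Hs x Hx u Hu)|apply Rmin_l].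
      * intros c' [Heq|Hc']; [subst c'|auto]. apply (SC_sub n F c x' r'); auto.
Qed.


Definition SL n F (S : list (list constr)) : Prop := forall x y : nat -> R,
  (forall i, (i < n)%nat -> y i = F x i) <-> exists C, In C S /\ forall c, In c C -> sat_constr n c x y.

Definition GoodAt n F (C : list constr) x1 r1 : Prop :=
  0 < r1 /\ forall x, ball n x1 r1 x -> forall c, In c C -> sat_constr n c x (F x).

Definition aff (n : nat) (g : (nat -> R) * (nat -> nat -> Q)) (x : nat -> R) (v : nat) : R :=
  fst g v + sum_range n (fun u => Q2R (snd g v u) * x u).

Definition stoch (n : nat) (g : (nat -> R) * (nat -> nat -> Q)) : Prop :=
  forall v, (v < n)%nat -> (forall u, (u < n)%nat -> 0 <= Q2R (snd g v u)) /\
     sum_range n (fun u => Q2R (snd g v u)) = 1.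

Definition eu (u : nat) : nat -> R := fun i => if Nat.eqb i u then 1 else 0.

Lemma aff_diff n g x y v : aff n g x v - aff n g y v = sum_range n (fun u => Q2R (snd g v u) * (x u - y u)).
Proof. unfold aff. rewrite (sum_range_ext n (fun u => Q2R (snd g v u) * (x u - y u)) (fun u => Q2R (snd g v u) * x u - Q2R (snd g v u) * y u)) by (intros; ring).
  rewrite sum_range_minus. ring. Qed.

Lemma dotz_dir n A x y t w : dotz n A x (fun i => y i + t * w i) = dotz n A x y + t * dotz n A (fun _ => 0) w.
Proof. transitivity (1 * dotz n A x y + t * dotz n A (fun _ => 0) w); [|ring].
  rewrite <- dotz_lin. apply dotz_ext; intros; ring. Qed.

Lemma dotz_eu n A u w : (u < n)%nat -> dotz n A (eu u) w = Q2R (A u) + sum_range n (fun i => Q2R (A (n+i)%nat) * w i).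
Proof. intros Hu. unfold dotz. f_equal. unfold eu.
  rewrite <- (sum_range_delta n u (fun i => Q2R (A i)) Hu). apply sum_range_ext. intros; ring. Qed.

Lemma dotz_comb n A (W : nat -> nat -> R) s : (forall u, (u < n)%nat -> dotz n A (eu u) (W u) = 0) ->
  dotz n A s (fun v => sum_range n (fun u => W u v * s u)) = 0.
Proof. intros H.
  transitivity (sum_range n (fun u => s u * dotz n A (eu u) (W u))).
  - rewrite (sum_range_ext n (fun u => s u * dotz n A (eu u) (W u))
               (fun u => Q2R (A u) * s u + sum_range n (fun v => Q2R (A (n+v)%nat) * (W u v * s u)))).
    2:{ intros u Hu. rewrite dotz_eu by auto. rewrite Rmult_plus_distr_l, <- sum_range_scal. f_equal; [ring|].
        apply sum_range_ext; intros; ring. }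
    rewrite sum_range_plus, (sum_range_exch n n (fun u v => Q2R (A (n + v)%nat) * (W u v * s u))). unfold dotz. f_equal.
    apply sum_range_ext. intros. rewrite <- sum_range_scal. apply sum_range_ext. intros; ring.
  - apply sum_range_zero. intros u Hu. rewrite H; auto. ring. Qed.

Lemma sat_eq n c x y : c_strict c = false -> sat_constr n c x y -> dotz n (c_A c) x y = c_b c.
Proof. unfold sat_constr. intros ->. auto. Qed.

Lemma uniq_dir n F S C x1 r1 : SL n F S -> In C S -> GoodAt n F C x1 r1 ->
  forall w, (forall c, In c C -> c_strict c = false -> dotz n (c_A c) (fun _ => 0) w = 0) ->
  forall u, (u < n)%nat -> w u = 0.
Proof. intros HS HC [Hr1 HG] w Hw.
  set (y1 := F x1).
  destruct (fin_eps C (fun c t => c_strict c = true -> In c C -> dotz n (c_A c) x1 (fun i => y1 i + t * w i) > c_b c))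
    as [t [Ht Htp]].
  { intros c e e' He [He' Hee] Hs HcC. specialize (He Hs HcC). rewrite dotz_dir in *.
    set (s := dotz n (c_A c) (fun _ => 0) w) in *. destruct (Rle_dec 0 s).
    - assert (Hm : dotz n (c_A c) x1 y1 > c_b c).
      { pose proof (HG x1 (ball_center n x1 r1 Hr1) c HcC) as Hc. unfold sat_constr in Hc. rewrite Hs in Hc. auto. }
      nra.
    - nra. }
  { intros c Hc. destruct (c_strict c) eqn:Hs; [|exists 1; split; [lra|]; intros; discriminate].
    pose proof (HG x1 (ball_center n x1 r1 Hr1) c Hc) as Hsat. unfold sat_constr in Hsat. rewrite Hs in Hsat.
    set (m := dotz n (c_A c) x1 (F x1) - c_b c). set (s := dotz n (c_A c) (fun _ => 0) w).
    exists (m / (Rabs s + 1)). pose proof (Rabs_pos s).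
    split. { apply Rdiv_lt_0_compat; unfold m; lra. }
    intros _ _. rewrite dotz_dir. fold s. unfold y1.
    assert (m / (Rabs s + 1) * s >= - (m / (Rabs s + 1) * Rabs s)).
    { assert (0 <= m / (Rabs s + 1)) by (left; apply Rdiv_lt_0_compat; unfold m; lra).
      pose proof (Rle_abs (- s)). rewrite Rabs_Ropp in H1. nra. }
    assert (m / (Rabs s + 1) * Rabs s < m).
    { apply Rlt_le_trans with (m / (Rabs s + 1) * (Rabs s + 1)).
      - apply Rmult_lt_compat_l; [apply Rdiv_lt_0_compat; unfold m|]; lra.
      - right. field. lra. }
    unfold m in *. lra. }
  assert (Hsat : exists C', In C' S /\ forall c, In c C' -> sat_constr n c x1 (fun i => y1 i + t * w i)).
  { exists C. split; auto. intros c Hc. unfold sat_constr. destruct (c_strict c) eqn:Hs.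
    - apply Htp; auto.
    - rewrite dotz_dir, Hw by auto. rewrite Rmult_0_r, Rplus_0_r.
      apply (sat_eq n c x1 (F x1)); auto. apply HG; auto. apply ball_center; auto. }
  pose proof (proj2 (HS x1 _) Hsat) as Hsat2. intros u Hu. specialize (Hsat2 u Hu). clear Hsat. rename Hsat2 into Hsat. unfold y1 in Hsat.
  assert (t * w u = 0) by lra. apply Rmult_integral in H as [H|H]; auto. lra. Qed.

Lemma dir_exists n F C x1 r1 : GoodAt n F C x1 r1 ->
  forall u, (u < n)%nat -> exists w, forall c, In c C -> c_strict c = false -> dotz n (c_A c) (eu u) w = 0.
Proof. intros [Hr1 HG] u Hu. set (t := r1 / 2).
  set (x := fun i => x1 i + t * eu u i).
  assert (Hb : ball n x1 r1 x).
  { intros i Hi. unfold x. replace (x1 i + t * eu u i - x1 i) with (t * eu u i) by ring.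
    unfold eu. destruct (Nat.eqb i u); rewrite ?Rmult_1_r, ?Rmult_0_r; [rewrite Rabs_right|rewrite Rabs_R0]; unfold t; lra. }
  exists (fun i => (F x i - F x1 i) / t). intros c Hc Hs.
  assert (Ht : t <> 0) by (unfold t; lra).
  apply (Rmult_eq_reg_l t); auto. rewrite Rmult_0_r, <- dotz_scal.
  rewrite (dotz_ext n (c_A c) _ _ (fun i => x i - x1 i) (fun i => F x i - F x1 i)).
  2:{ intros; unfold x; ring. } 2:{ intros; field; auto. }
  rewrite <- dotz_sub. rewrite (sat_eq n c x (F x)), (sat_eq n c x1 (F x1)); auto; try ring.
  all: apply HG; auto; apply ball_center; auto. Qed.

Lemma dir_rat n (C : list constr) u w : (u < n)%nat ->
  (forall c, In c C -> c_strict c = false -> dotz n (c_A c) (eu u) w = 0) ->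
  exists wq : nat -> Q, forall c, In c C -> c_strict c = false -> dotz n (c_A c) (eu u) (fun i => Q2R (wq i)) = 0.
Proof. intros Hu Hw.
  set (eqs := map (fun c => ((fun i => c_A c (n+i)%nat), (- c_A c u)%Q)) (filter (fun c => negb (c_strict c)) C)).
  destruct (rat_sol n eqs w) as [wq Hwq].
  { intros e He. unfold eqs in He. apply in_map_iff in He as [c [<- Hc]]. apply filter_In in Hc as [Hc Hs].
    simpl. rewrite Q2R_opp. specialize (Hw c Hc). rewrite dotz_eu in Hw by auto.
    destruct (c_strict c); [discriminate|]. specialize (Hw eq_refl). lra. }
  exists wq. intros c Hc Hs. rewrite dotz_eu by auto.
  assert (Hin : In (pair (fun i => c_A c (n+i)%nat) (Qopp (c_A c u))) eqs).
  { unfold eqs. apply in_map_iff. exists c. split; [reflexivity|]. apply filter_In. split; auto. rewrite Hs. reflexivity. }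
  specialize (Hwq _ Hin). simpl in Hwq. rewrite Hwq, Q2R_opp. ring. Qed.

Lemma piece_good n F S C : monotone n F -> homogeneous n F -> SL n F S -> In C S ->
  (exists x1 r1, GoodAt n F C x1 r1) ->
  exists g, stoch n g /\ forall x2 r2, GoodAt n F C x2 r2 -> forall x, ball n x2 r2 x ->
     forall v, (v < n)%nat -> F x v = aff n g x v.
Proof. intros Hm Hh HS HC [x1 [r1 HG1]].
  assert (Hdir : forall u, exists wq : nat -> Q, (u < n)%nat -> forall c, In c C -> c_strict c = false ->
               dotz n (c_A c) (eu u) (fun i => Q2R (wq i)) = 0).
  { intros u. destruct (Nat.lt_ge_cases u n) as [Hu|Hu].
    - destruct (dir_exists n F C x1 r1 HG1 u Hu) as [w Hw].
      destruct (dir_rat n C u w Hu Hw) as [wq Hwq]. exists wq. auto.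
    - exists (fun _ => 0%Q). intros; lia. }
  destruct (IndefiniteDescription.functional_choice _ Hdir) as [Pq HPq].
  set (P := fun v u => Pq u v).
  set (c0 := fun v => F x1 v - sum_range n (fun u => Q2R (P v u) * x1 u)).
  set (g := (c0, P)).
  assert (Hkey : forall x2 r2, GoodAt n F C x2 r2 -> forall x, ball n x2 r2 x ->
     forall v, (v < n)%nat -> F x v = aff n g x v).
  { intros x2 r2 HG2 x Hx.
    set (w := fun v => (F x v - F x1 v) - sum_range n (fun u => Q2R (P v u) * (x u - x1 u))).
    assert (Hw : forall v, (v < n)%nat -> w v = 0).
    { apply (uniq_dir n F S C x1 r1 HS HC HG1). intros c Hc Hs.
      rewrite (dotz_ext n (c_A c) _ _ (fun i => (x i - x1 i) - (x i - x1 i))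
                 (fun i => (F x i - F x1 i) - sum_range n (fun u => Q2R (Pq u i) * (x u - x1 u)))).
      2:{ intros; ring. } 2:{ intros; reflexivity. }
      rewrite <- dotz_sub, dotz_comb.
      2:{ intros u Hu. apply HPq; auto. }
      rewrite <- dotz_sub.
      rewrite (sat_eq n c x (F x)), (sat_eq n c x1 (F x1)); auto; try ring.
      - apply HG1; auto. apply ball_center. apply HG1.
      - apply HG2; auto. }
    intros v Hv. specialize (Hw v Hv). unfold w in Hw. unfold aff, g, c0; simpl.
    rewrite (sum_range_ext n (fun u => Q2R (P v u) * (x u - x1 u)) (fun u => Q2R (P v u) * x u - Q2R (P v u) * x1 u)) in Hw by (intros; ring).
    rewrite sum_range_minus in Hw. lra. }
  exists g. split; [|exact Hkey].
  destruct HG1 as [Hr1 HG1'].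
  assert (HGb : GoodAt n F C x1 r1) by (split; auto).
  intros v Hv. split.
  - intros u Hu. set (t := r1 / 2). set (x := fun i => x1 i + t * eu u i).
    assert (Hb : ball n x1 r1 x).
    { intros i Hi. unfold x. replace (x1 i + t * eu u i - x1 i) with (t * eu u i) by ring.
      unfold eu. destruct (Nat.eqb i u); rewrite ?Rmult_1_r, ?Rmult_0_r; [rewrite Rabs_right|rewrite Rabs_R0]; unfold t; lra. }
    pose proof (Hkey x1 r1 HGb x Hb v Hv) as E1.
    pose proof (Hkey x1 r1 HGb x1 (ball_center n x1 r1 Hr1) v Hv) as E2.
    pose proof (aff_diff n g x x1 v) as E3.
    rewrite (sum_range_ext n _ (fun i => (if Nat.eqb i u then 1 else 0) * (t * Q2R (snd g v i)))) in E3.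
    2:{ intros i _. unfold x, eu. destruct (Nat.eqb i u); ring. }
    rewrite sum_range_delta in E3 by auto.
    assert (Hmon : F x1 v <= F x v).
    { apply Hm; auto. intros i _. unfold x, eu. destruct (Nat.eqb i u); unfold t; lra. }
    assert (0 <= t * Q2R (snd g v u)) by lra.
    unfold t in H. simpl in H |- *. nra.
  - set (t := r1 / 2). set (x := fun j => t + x1 j).
    assert (Hb : ball n x1 r1 x).
    { intros i Hi. unfold x. replace (t + x1 i - x1 i) with t by ring. rewrite Rabs_right; unfold t; lra. }
    pose proof (Hkey x1 r1 HGb x Hb v Hv) as E1.
    pose proof (Hkey x1 r1 HGb x1 (ball_center n x1 r1 Hr1) v Hv) as E2.
    pose proof (aff_diff n g x x1 v) as E3.
    rewrite (sum_range_ext n _ (fun i => t * Q2R (snd g v i))) in E3.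
    2:{ intros i _. unfold x. ring. }
    rewrite sum_range_scal in E3.
    pose proof (Hh t x1 v Hv) as E4. fold x in E4.
    assert (t * sum_range n (fun i => Q2R (snd g v i)) = t * 1) by lra.
    apply Rmult_eq_reg_l in H; auto. unfold t; lra.
Qed.


Lemma term_le_sum n f u : (u < n)%nat -> (forall i, (i < n)%nat -> 0 <= f i) -> f u <= sum_range n f.
Proof. intros Hu H. rewrite <- (sum_range_delta n u f Hu). apply sum_range_le. intros i Hi.
  specialize (H i Hi). destruct (Nat.eqb i u); lra. Qed.

Lemma aff_lip n g x y v d : (forall u, (u < n)%nat -> Rabs (x u - y u) <= d) ->
  Rabs (aff n g x v - aff n g y v) <= sum_range n (fun u => Rabs (Q2R (snd g v u))) * d.
Proof. intros H. unfold aff.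
  replace (fst g v + sum_range n (fun u : nat => Q2R (snd g v u) * x u) -
    (fst g v + sum_range n (fun u : nat => Q2R (snd g v u) * y u))) with
    (sum_range n (fun u : nat => Q2R (snd g v u) * x u) - sum_range n (fun u : nat => Q2R (snd g v u) * y u)) by ring.
  apply sum_lip; auto. Qed.

Lemma GL_exists n F S : monotone n F -> homogeneous n F -> SL n F S ->
  exists GL, (forall g, In g GL -> stoch n g) /\
    forall C, In C S -> (exists x1 r1, GoodAt n F C x1 r1) ->
      exists g, In g GL /\ forall x2 r2, GoodAt n F C x2 r2 -> forall x, ball n x2 r2 x ->
        forall v, (v < n)%nat -> F x v = aff n g x v.
Proof. intros Hm Hh HS.
  assert (Hgen : forall l, incl l S -> exists GL, (forall g, In g GL -> stoch n g) /\
    forall C, In C l -> (exists x1 r1, GoodAt n F C x1 r1) ->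
      exists g, In g GL /\ forall x2 r2, GoodAt n F C x2 r2 -> forall x, ball n x2 r2 x ->
        forall v, (v < n)%nat -> F x v = aff n g x v).
  { induction l as [|C l IH]; intros Hincl.
    - exists nil. split; [intros _ []|]. intros C [].
    - destruct IH as [GL [H1 H2]]. { intros z Hz. apply Hincl. right; auto. }
      destruct (classic (exists x1 r1, GoodAt n F C x1 r1)) as [HG|HnG].
      + destruct (piece_good n F S C Hm Hh HS (Hincl C (or_introl eq_refl)) HG) as [g [Hg1 Hg2]].
        exists (g :: GL). split.
        * intros g' [<-|Hg']; auto.
        * intros C' [<-|HC'] HG'.
          -- exists g. split; [left; auto|]. auto.
          -- destruct (H2 C' HC' HG') as [g' [Hin Hg']]. exists g'. split; [right; auto|auto].
      + exists GL. split; auto. intros C' [<-|HC'] HG'; [contradiction|]. auto. }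
  apply Hgen. intros z Hz; auto. Qed.

Lemma sat_from_SC n F c x1 r1 x : ball n x1 r1 x -> 0 < r1 -> SC n F c x1 r1 ->
  sat_constr n c x1 (F x1) -> sat_constr n c x (F x).
Proof. intros Hx Hr [H|[H|H]]; unfold sat_constr; pose proof (H x1 (ball_center n x1 r1 Hr)) as H1;
  pose proof (H x Hx) as H2; unfold phi in *; destruct (c_strict c); lra. Qed.

Lemma selection n F S GL : monotone n F -> homogeneous n F -> SL n F S ->
  (forall C, In C S -> (exists x1 r1, GoodAt n F C x1 r1) ->
      exists g, In g GL /\ forall x2 r2, GoodAt n F C x2 r2 -> forall x, ball n x2 r2 x ->
        forall v, (v < n)%nat -> F x v = aff n g x v) ->
  forall x0 v, (v < n)%nat -> exists g, In g GL /\ F x0 v = aff n g x0 v.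
Proof. intros Hm Hh HS HGL x0 v Hv. apply NNPP. intros Hno.
  assert (Hne : forall g, In g GL -> F x0 v <> aff n g x0 v).
  { intros g Hg He. apply Hno. exists g; auto. }
  destruct (fin_eps GL (fun g d => In g GL -> forall x, ball n x0 d x -> F x v <> aff n g x v)) as [d [Hd Hdp]].
  { intros g e e' He [He' Hee] Hg x Hx. apply He; auto. intros u Hu. specialize (Hx u Hu). lra. }
  { intros g Hg. set (m := Rabs (F x0 v - aff n g x0 v)).
    assert (Hm0 : 0 < m) by (apply Rabs_pos_lt; specialize (Hne g Hg); lra).
    set (L := sum_range n (fun u => Rabs (Q2R (snd g v u)))).
    assert (HL : 0 <= L) by (apply sum_range_nonneg; intros; apply Rabs_pos).
    exists (m / (L + 2)). split; [apply Rdiv_lt_0_compat; lra|].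
    intros _ x Hx Heq.
    assert (Hc : forall u, (u < n)%nat -> Rabs (x u - x0 u) <= m / (L + 2)) by (intros u Hu; left; apply Hx; auto).
    pose proof (F_lip n F Hm Hh x x0 _ Hc v Hv) as E1.
    pose proof (aff_lip n g x x0 v _ Hc) as E2. fold L in E2.
    assert (E3 : Rabs (F x0 v - aff n g x0 v) <= (1 + L) * (m / (L + 2))).
    { replace (F x0 v - aff n g x0 v) with (- (F x v - F x0 v) + (aff n g x v - aff n g x0 v)) by (rewrite Heq; ring).
      eapply Rle_trans; [apply Rabs_triang|]. rewrite Rabs_Ropp. lra. }
    fold m in E3.
    assert ((1 + L) * (m / (L + 2)) < m).
    { apply Rlt_le_trans with ((L + 2) * (m / (L + 2))).
      - apply Rmult_lt_compat_r; [apply Rdiv_lt_0_compat|]; lra.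
      - right. field. lra. }
    lra. }
  destruct (shrink n F Hm Hh (concat S) x0 d Hd) as [x1 [r1 [Hr1 [Hsub HSC]]]].
  destruct (proj1 (HS x1 (F x1)) (fun i _ => eq_refl)) as [C [HC Hsat]].
  assert (HG : GoodAt n F C x1 r1).
  { split; auto. intros x Hx c Hc. apply (sat_from_SC n F c x1 r1 x Hx Hr1).
    - apply HSC. apply in_concat. exists C; auto.
    - apply Hsat; auto. }
  destruct (HGL C HC (ex_intro _ x1 (ex_intro _ r1 HG))) as [g [Hg Hgf]].
  apply (Hdp g Hg Hg x1).
  - apply Hsub. apply ball_center; auto.
  - apply (Hgf x1 r1 HG x1 (ball_center n x1 r1 Hr1) v Hv). Qed.

Lemma segment n F GL : is_map_Rn n F -> monotone n F -> homogeneous n F ->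
  (forall x0 v, (v < n)%nat -> exists g, In g GL /\ F x0 v = aff n g x0 v) ->
  forall a x v, (v < n)%nat -> exists g, In g GL /\ aff n g a v <= F a v /\ F x v <= aff n g x v.
Proof. intros Hmap Hm Hh Hsel a x v Hv.
  set (seg := fun t => fun i => a i + t * (x i - a i)).
  set (K := sum_range n (fun u => Rabs (x u - a u))).
  assert (HK : 0 <= K) by (apply sum_range_nonneg; intros; apply Rabs_pos).
  destruct (oneD (fun t => F (seg t) v) K (map (fun g => (aff n g a v, aff n g x v - aff n g a v)) GL) HK)
    as [ab [Hab [H0 H1]]].
  - intros s t. cbv beta. apply (F_lip n F Hm Hh); auto. intros u Hu. unfold seg.
    replace (a u + s * (x u - a u) - (a u + t * (x u - a u))) with ((s - t) * (x u - a u)) by ring.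
    rewrite Rabs_mult, Rmult_comm. apply Rmult_le_compat_r; [apply Rabs_pos|].
    apply (term_le_sum n (fun u => Rabs (x u - a u))); auto. intros; apply Rabs_pos.
  - intros t _. destruct (Hsel (seg t) v Hv) as [g [Hg Hgv]]. exists (aff n g a v, aff n g x v - aff n g a v).
    split; [apply in_map_iff; exists g; split; auto|]. simpl. rewrite Hgv.
    pose proof (aff_diff n g (seg t) a v) as E1. pose proof (aff_diff n g x a v) as E2.
    rewrite (sum_range_ext n _ (fun u => t * (Q2R (snd g v u) * (x u - a u)))) in E1.
    2:{ intros; unfold seg; ring. }
    rewrite sum_range_scal, <- E2 in E1. lra.
  - apply in_map_iff in Hab as [g [<- Hg]]. simpl in H0, H1. exists g. split; auto.
    assert (E0 : F (seg 0) v = F a v) by (apply Hmap; auto; intros; unfold seg; ring).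
    assert (E1 : F (seg 1) v = F x v) by (apply Hmap; auto; intros; unfold seg; ring).
    lra. Qed.


Lemma dm_enc S v s : (s < S)%nat -> ((v*S+s)/S = v /\ (v*S+s) mod S = s)%nat.
Proof. intros. split. - symmetry; apply Nat.div_unique with s; lia. - symmetry; apply Nat.mod_unique with v; lia. Qed.

Lemma dm_dec S w : (0 < S)%nat -> (w = (w/S)*S + w mod S /\ w mod S < S)%nat.
Proof. intros. pose proof (Nat.div_mod w S ltac:(lia)). pose proof (Nat.mod_upper_bound w S ltac:(lia)). lia. Qed.

Lemma div_bound S w n : (0 < S)%nat -> (w < n * S)%nat -> (w / S < n)%nat.
Proof. intros H1 H2. destruct (dm_dec S w H1) as [E _]. nia. Qed.

Fixpoint allmasks (k : nat) : list (list bool) :=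
  match k with
  | O => nil :: nil
  | S k' => map (cons true) (allmasks k') ++ map (cons false) (allmasks k')
  end.

Lemma allmasks_len k m : In m (allmasks k) -> length m = k.
Proof. revert m; induction k; simpl; intros m H.
  - destruct H as [<-|[]]; auto.
  - apply in_app_iff in H as [H|H]; apply in_map_iff in H as [m' [<- H]]; simpl; auto. Qed.

Lemma allmasks_in k m : length m = k -> In m (allmasks k).
Proof. revert m; induction k; simpl; intros m H.
  - destruct m; [left; auto|discriminate].
  - destruct m as [|b m]; [discriminate|]. simpl in H. apply in_app_iff.
    destruct b; [left|right]; apply in_map; auto. Qed.

Notation aty := ((nat -> R) * (nat -> nat -> Q))%type.
Definition gj (GL : list aty) j : aty := nth j GL ((fun _ => 0), (fun _ _ => 0%Q)).
Definition Sn (GL : list aty) := length (allmasks (length GL)).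
Definition maskof (GL : list aty) s := nth s (allmasks (length GL)) nil.
Definition eff (GL : list aty) s j : bool :=
  if existsb (fun b => b) (maskof GL s) then nth j (maskof GL s) false else true.
Definition adm n F (GL : list aty) v s : bool :=
  if excluded_middle_informative (forall x, exists j, (j < length GL)%nat /\ eff GL s j = true /\
       F x v <= aff n (gj GL j) x v) then true else false.
Definition Pv (GL : list aty) rho u : Q := snd (gj GL (rho mod length GL)) (rho / length GL)%nat u.
Definition cv (GL : list aty) rho : R := fst (gj GL (rho mod length GL)) (rho / length GL)%nat.
Definition posq (q : Q) : bool := negb (Qle_bool q 0).

Definition minE n F GL : list (vtx * vtx) :=
  map (fun w => (VMin (w / Sn GL), VMax w)) (filter (fun w => adm n F GL (w / Sn GL) (w mod Sn GL)) (seq 0 (n * Sn GL))).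
Definition maxE n GL : list (vtx * vtx) :=
  map (fun z => (VMax (z / length GL), VRand ((z / length GL / Sn GL) * length GL + z mod length GL)))
    (filter (fun z => eff GL ((z / length GL) mod Sn GL) (z mod length GL)) (seq 0 (n * Sn GL * length GL))).
Definition randE n GL : list (vtx * vtx) :=
  map (fun z => (VRand (z / n), VMin (z mod n)))
    (filter (fun z => posq (Pv GL (z / n) (z mod n))) (seq 0 (n * length GL * n))).

Definition gr GL (e : vtx * vtx) : R := match e with (VMax _, VRand rho) => cv GL rho | _ => 0 end.
Definition gq GL (e : vtx * vtx) : Q := match e with (VRand rho, VMin u) => Pv GL rho u | _ => 0%Q end.
Definition GG n F GL : game := mkGame n (n * length GL) (n * Sn GL) (minE n F GL ++ maxE n GL ++ randE n GL) (gr GL) (gq GL).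
Definition pp GL (s t : vtx) : R :=
  match s with
  | VRand rho => match t with VMin u => Q2R (Pv GL rho u) | _ => 0 end
  | _ => if vtx_eqb s t then 1 else 0
  end.

Lemma Sn_pos GL : (0 < Sn GL)%nat.
Proof. unfold Sn. destruct (allmasks (length GL)) eqn:E; simpl; [|lia].
  pose proof (allmasks_in (length GL) (repeat true (length GL)) (repeat_length _ _)). rewrite E in H. destruct H. Qed.

Lemma in_minE n F GL e : In e (minE n F GL) <-> exists v s, (v < n)%nat /\ (s < Sn GL)%nat /\ adm n F GL v s = true /\
   e = (VMin v, VMax (v * Sn GL + s)).
Proof. pose proof (Sn_pos GL). unfold minE. rewrite in_map_iff. split.
  - intros [w [<- Hw]]. apply filter_In in Hw as [Hw Ha]. apply in_seq in Hw.
    destruct (dm_dec (Sn GL) w H) as [E1 E2].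
    exists (w / Sn GL)%nat, (w mod Sn GL)%nat. repeat split; auto. apply div_bound; lia. rewrite <- E1; auto.
  - intros [v [s [Hv [Hs [Ha ->]]]]]. exists (v * Sn GL + s)%nat. destruct (dm_enc (Sn GL) v s Hs) as [E1 E2].
    rewrite E1. split; auto. apply filter_In. rewrite E1, E2. split; auto. apply in_seq. nia. Qed.

Lemma in_maxE n GL e : (0 < length GL)%nat -> In e (maxE n GL) <-> exists w j, (w < n * Sn GL)%nat /\ (j < length GL)%nat /\
   eff GL (w mod Sn GL) j = true /\ e = (VMax w, VRand ((w / Sn GL) * length GL + j)).
Proof. intros HK. pose proof (Sn_pos GL). unfold maxE. rewrite in_map_iff. split.
  - intros [z [<- Hz]]. apply filter_In in Hz as [Hz Ha]. apply in_seq in Hz.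
    destruct (dm_dec (length GL) z HK) as [E1 E2].
    exists (z / length GL)%nat, (z mod length GL)%nat. repeat split; auto. apply div_bound; lia.
  - intros [w [j [Hw [Hj [Ha ->]]]]]. exists (w * length GL + j)%nat. destruct (dm_enc (length GL) w j Hj) as [E1 E2].
    rewrite E1, E2. split; auto. apply filter_In. rewrite E1, E2. split; auto. apply in_seq. nia. Qed.

Lemma in_randE n GL e : (0 < n)%nat -> In e (randE n GL) <-> exists rho u, (rho < n * length GL)%nat /\ (u < n)%nat /\
   posq (Pv GL rho u) = true /\ e = (VRand rho, VMin u).
Proof. intros Hn. unfold randE. rewrite in_map_iff. split.
  - intros [z [<- Hz]]. apply filter_In in Hz as [Hz Ha]. apply in_seq in Hz.
    destruct (dm_dec n z Hn) as [E1 E2].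
    exists (z / n)%nat, (z mod n)%nat. repeat split; auto. apply div_bound; lia.
  - intros [rho [u [Hr [Hu [Ha ->]]]]]. exists (rho * n + u)%nat. destruct (dm_enc n rho u Hu) as [E1 E2].
    rewrite E1, E2. split; auto. apply filter_In. rewrite E1, E2. split; auto. apply in_seq. nia. Qed.

Lemma vtx_eqb_spec a b : vtx_eqb a b = true <-> a = b.
Proof. destruct a, b; simpl; rewrite ?Nat.eqb_eq; split; intros H; try discriminate; try congruence. Qed.

Lemma vtx_eqb_refl a : vtx_eqb a a = true.
Proof. apply vtx_eqb_spec. auto. Qed.

Lemma in_out G x e : In e (out G x) <-> In e (g_edges G) /\ fst e = x.
Proof. unfold out. rewrite filter_In, vtx_eqb_spec. tauto. Qed.

Lemma in_edges n F GL e : (0 < n)%nat -> (0 < length GL)%nat -> In e (g_edges (GG n F GL)) <->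
  In e (minE n F GL) \/ In e (maxE n GL) \/ In e (randE n GL).
Proof. intros. simpl. rewrite !in_app_iff. tauto. Qed.


Lemma NoDup_map_inj {A B} (f : A -> B) l : NoDup l -> (forall a b, In a l -> In b l -> f a = f b -> a = b) -> NoDup (map f l).
Proof. induction 1 as [|x l Hx Hl IH]; intros Hi; simpl; constructor.
  - intros Hin. apply in_map_iff in Hin as [y [Hy Hyl]]. assert (y = x) by (apply Hi; simpl; auto). subst. auto.
  - apply IH. intros; apply Hi; simpl; auto. Qed.

Lemma nth_mask K (T : nat -> bool) j : (j < K)%nat -> nth j (map T (seq 0 K)) false = T j.
Proof. intros Hj. rewrite (nth_indep (map T (seq 0 K)) false (T 0%nat)) by (rewrite length_map, length_seq; auto).
  rewrite map_nth, seq_nth by auto. reflexivity. Qed.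

Lemma gj_in GL g : In g GL -> exists j, (j < length GL)%nat /\ gj GL j = g.
Proof. intros H. apply (In_nth _ _ ((fun _ => 0), (fun _ _ => 0%Q))) in H as [j [Hj E]]. exists j. auto. Qed.

Lemma adm_exists n F GL :
  (forall x0 v, (v < n)%nat -> exists g, In g GL /\ F x0 v = aff n g x0 v) ->
  (forall a x v, (v < n)%nat -> exists g, In g GL /\ aff n g a v <= F a v /\ F x v <= aff n g x v) ->
  forall x0 v, (v < n)%nat -> exists s, (s < Sn GL)%nat /\ adm n F GL v s = true /\
     forall j, (j < length GL)%nat -> eff GL s j = true -> aff n (gj GL j) x0 v <= F x0 v.
Proof. intros Hsel Hseg x0 v Hv.
  set (K := length GL).
  set (T := fun j => if Rle_dec (aff n (gj GL j) x0 v) (F x0 v) then true else false).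
  set (m := map T (seq 0 K)).
  assert (Hm : In m (allmasks K)) by (apply allmasks_in; unfold m; rewrite length_map, length_seq; auto).
  apply (In_nth _ _ nil) in Hm as [s [Hs Es]].
  assert (Hmask : maskof GL s = m) by exact Es.
  assert (Heff : forall j, (j < K)%nat -> eff GL s j = T j).
  { intros j Hj. unfold eff. rewrite Hmask.
    destruct (existsb (fun b => b) m) eqn:Ex. { unfold m. apply nth_mask; auto. }
    exfalso. destruct (Hsel x0 v Hv) as [g [Hg Hgv]]. destruct (gj_in GL g Hg) as [j0 [Hj0 Ej0]].
    assert (existsb (fun b => b) m = true).
    { apply existsb_exists. exists (T j0). split.
      - unfold m. apply in_map. apply in_seq. assert (j0 < K)%nat by exact Hj0. lia.
      - unfold T. rewrite Ej0. destruct (Rle_dec (aff n g x0 v) (F x0 v)); auto. lra. }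
    congruence. }
  exists s. split; [exact Hs|]. split.
  - unfold adm. destruct (excluded_middle_informative _) as [_|Hn]; auto. exfalso. apply Hn.
    intros x. destruct (Hseg x0 x v Hv) as [g [Hg [H1 H2]]]. destruct (gj_in GL g Hg) as [j [Hj Ej]].
    exists j. split; auto. split; [|rewrite Ej; auto]. rewrite Heff by auto. unfold T. rewrite Ej.
    destruct (Rle_dec (aff n g x0 v) (F x0 v)); auto.
  - intros j Hj He. rewrite Heff in He by auto. unfold T in He.
    destruct (Rle_dec (aff n (gj GL j) x0 v) (F x0 v)); auto. discriminate. Qed.


Lemma out_min n F GL v e : (0 < n)%nat -> (0 < length GL)%nat -> (v < n)%nat ->
  In e (out (GG n F GL) (VMin v)) <-> exists s, (s < Sn GL)%nat /\ adm n F GL v s = true /\ e = (VMin v, VMax (v * Sn GL + s)).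
Proof. intros Hn HK Hv. rewrite in_out, in_edges by auto. split.
  - intros [[H|[H|H]] Hf].
    + apply in_minE in H as [v' [s [Hv' [Hs [Ha ->]]]]]. simpl in Hf. injection Hf as ->. exists s; auto.
    + apply in_maxE in H as [w [j [_ [_ [_ ->]]]]]; auto. discriminate.
    + apply in_randE in H as [r [u [_ [_ [_ ->]]]]]; auto. discriminate.
  - intros [s [Hs [Ha ->]]]. split; [|reflexivity]. left. apply in_minE. exists v, s. auto. Qed.

Lemma out_max n F GL w e : (0 < n)%nat -> (0 < length GL)%nat -> (w < n * Sn GL)%nat ->
  In e (out (GG n F GL) (VMax w)) <-> exists j, (j < length GL)%nat /\ eff GL (w mod Sn GL) j = true /\
     e = (VMax w, VRand ((w / Sn GL) * length GL + j)).
Proof. intros Hn HK Hw. rewrite in_out, in_edges by auto. split.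
  - intros [[H|[H|H]] Hf].
    + apply in_minE in H as [v' [s [Hv' [Hs [Ha ->]]]]]. discriminate.
    + apply in_maxE in H as [w' [j [Hw' [Hj [He ->]]]]]; auto. simpl in Hf. injection Hf as ->. exists j; auto.
    + apply in_randE in H as [r [u [_ [_ [_ ->]]]]]; auto. discriminate.
  - intros [j [Hj [He ->]]]. split; [|reflexivity]. right; left. apply in_maxE; auto. exists w, j. auto. Qed.

Lemma out_rand n F GL r e : (0 < n)%nat -> (0 < length GL)%nat -> (r < n * length GL)%nat ->
  In e (out (GG n F GL) (VRand r)) <-> exists u, (u < n)%nat /\ posq (Pv GL r u) = true /\ e = (VRand r, VMin u).
Proof. intros Hn HK Hr. rewrite in_out, in_edges by auto. split.
  - intros [[H|[H|H]] Hf].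
    + apply in_minE in H as [v' [s [Hv' [Hs [Ha ->]]]]]. discriminate.
    + apply in_maxE in H as [w' [j [Hw' [Hj [He ->]]]]]; auto. discriminate.
    + apply in_randE in H as [r' [u [Hr' [Hu [Hp ->]]]]]; auto. simpl in Hf. injection Hf as ->. exists u; auto.
  - intros [u [Hu [Hp ->]]]. split; [|reflexivity]. right; right. apply in_randE; auto. exists r, u. auto. Qed.

Lemma NoDup_edges n F GL : (0 < n)%nat -> (0 < length GL)%nat -> NoDup (g_edges (GG n F GL)).
Proof. intros Hn HK. pose proof (Sn_pos GL) as HS. simpl. apply NoDup_app; [|apply NoDup_app|].
  - unfold minE. apply NoDup_map_inj; [apply NoDup_filter, seq_NoDup|]. intros a b _ _ H. congruence.
  - unfold maxE. apply NoDup_map_inj; [apply NoDup_filter, seq_NoDup|]. intros a b _ _ H. injection H as H1 H2.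
    rewrite H1 in H2. apply Nat.add_cancel_l in H2.
    destruct (dm_dec (length GL) a HK) as [E1 _]. destruct (dm_dec (length GL) b HK) as [E2 _].
    rewrite E1, E2, H1, H2. reflexivity.
  - unfold randE. apply NoDup_map_inj; [apply NoDup_filter, seq_NoDup|]. intros a b _ _ H. injection H as H1 H2.
    destruct (dm_dec n a Hn) as [E1 _]. destruct (dm_dec n b Hn) as [E2 _].
    rewrite E1, E2, H1, H2. reflexivity.
  - intros a Ha Hb. apply in_maxE in Ha as [w' [j [Hw' [Hj [He ->]]]]]; auto.
    apply in_randE in Hb as [r' [u [Hr' [Hu [Hp Heq]]]]]; auto. discriminate.
  - intros a Ha Hb. apply in_minE in Ha as [v' [s [Hv' [Hs [Ha' ->]]]]]. apply in_app_iff in Hb as [Hb|Hb].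
    + apply in_maxE in Hb as [w' [j [Hw' [Hj [He Heq]]]]]; auto. discriminate.
    + apply in_randE in Hb as [r' [u [Hr' [Hu [Hp Heq]]]]]; auto. discriminate. Qed.

Lemma edge_cases n F GL e : (0 < n)%nat -> (0 < length GL)%nat -> In e (g_edges (GG n F GL)) ->
  (exists v s, (v < n)%nat /\ (s < Sn GL)%nat /\ adm n F GL v s = true /\ e = (VMin v, VMax (v * Sn GL + s))) \/
  (exists w j, (w < n * Sn GL)%nat /\ (j < length GL)%nat /\ eff GL (w mod Sn GL) j = true /\ e = (VMax w, VRand ((w / Sn GL) * length GL + j))) \/
  (exists r u, (r < n * length GL)%nat /\ (u < n)%nat /\ posq (Pv GL r u) = true /\ e = (VRand r, VMin u)).
Proof. intros Hn HK H. apply in_edges in H as [H|[H|H]]; auto.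
  - left. apply in_minE; auto.
  - right; left. apply in_maxE; auto.
  - right; right. apply in_randE; auto. Qed.

Lemma Pv_stoch n GL r : (0 < length GL)%nat -> (forall g, In g GL -> stoch n g) -> (r < n * length GL)%nat ->
  (forall u, (u < n)%nat -> 0 <= Q2R (Pv GL r u)) /\ sum_range n (fun u => Q2R (Pv GL r u)) = 1.
Proof. intros HK Hst Hr. unfold Pv.
  assert (Hin : In (gj GL (r mod length GL)) GL) by (apply nth_In; apply Nat.mod_upper_bound; lia).
  apply (Hst _ Hin). apply div_bound; auto. Qed.

Lemma posq_pos q : posq q = true -> (0 < q)%Q.
Proof. unfold posq. intros H. apply Qnot_le_lt. intros Hc. apply Qle_bool_iff in Hc. rewrite Hc in H. discriminate. Qed.

Lemma posq_false q : posq q = false -> Q2R q <= 0.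
Proof. unfold posq. intros H. destruct (Qle_bool q 0) eqn:E; [|discriminate].
  apply Qle_bool_iff in E. apply Qle_Rle in E. unfold Q2R in E at 2. simpl in E. lra. Qed.

Lemma sumR_filter_zero {A} (g : A -> R) (b : A -> bool) l : (forall a, In a l -> b a = false -> g a = 0) ->
  sumR (map g (filter b l)) = sumR (map g l).
Proof. intros H. induction l as [|a l IH]; simpl; auto. destruct (b a) eqn:E; simpl; rewrite IH; auto.
  - intros; apply H; simpl; auto.
  - rewrite (H a (or_introl eq_refl) E). ring.
  - intros; apply H; simpl; auto. Qed.

Lemma sum_out_rand n F GL r (h : vtx * vtx -> R) : (0 < n)%nat -> (0 < length GL)%nat -> (r < n * length GL)%nat ->
  sumR (map h (out (GG n F GL) (VRand r))) =
  sumR (map (fun u => h (VRand r, VMin u)) (filter (fun u => posq (Pv GL r u)) (seq 0 n))).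
Proof. intros Hn HK Hr. rewrite <- (map_map (fun u => (VRand r, VMin u)) h).
  apply sumR_perm. apply Permutation_map. apply NoDup_Permutation.
  - unfold out. apply NoDup_filter. apply NoDup_edges; auto.
  - apply NoDup_map_inj; [apply NoDup_filter, seq_NoDup|]. intros a b _ _ H. congruence.
  - intros e. rewrite out_rand by auto. rewrite in_map_iff. split.
    + intros [u [Hu [Hp ->]]]. exists u. split; auto. apply filter_In. split; auto. apply in_seq. lia.
    + intros [u [<- Hu]]. apply filter_In in Hu as [Hu Hp]. apply in_seq in Hu. exists u. split; auto. lia. Qed.

Lemma eff_exists GL s : (0 < length GL)%nat -> (s < Sn GL)%nat -> exists j, (j < length GL)%nat /\ eff GL s j = true.
Proof. intros HK Hs. unfold eff. destruct (existsb (fun b => b) (maskof GL s)) eqn:E.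
  - apply existsb_exists in E as [b [Hb Hbt]]. subst b.
    apply (In_nth _ _ false) in Hb as [j [Hj Ej]]. exists j. split; auto.
    assert (Hl : length (maskof GL s) = length GL) by (apply allmasks_len; apply nth_In; auto).
    rewrite <- Hl. auto.
  - exists 0%nat. auto. Qed.

Lemma game_ok_GG n F GL : (0 < n)%nat -> (0 < length GL)%nat -> (forall g, In g GL -> stoch n g) ->
  (forall x0 v, (v < n)%nat -> exists s, (s < Sn GL)%nat /\ adm n F GL v s = true /\
     forall j, (j < length GL)%nat -> eff GL s j = true -> aff n (gj GL j) x0 v <= F x0 v) ->
  game_ok (GG n F GL).
Proof. intros Hn HK Hst Hadm. pose proof (Sn_pos GL) as HS.
  assert (Hrand_ex : forall r, (r < n * length GL)%nat -> exists u, (u < n)%nat /\ posq (Pv GL r u) = true).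
  { intros r Hr. destruct (Pv_stoch n GL r HK Hst Hr) as [H0 H1]. apply NNPP. intros Hno.
    assert (sum_range n (fun u => Q2R (Pv GL r u)) = 0).
    { apply sum_range_zero. intros u Hu. destruct (posq (Pv GL r u)) eqn:E.
      - exfalso; apply Hno; exists u; auto.
      - apply posq_false in E. specialize (H0 u Hu). lra. }
    lra. }
  unfold game_ok. simpl. split; [auto|]. split; [nia|]. split; [apply NoDup_edges; auto|]. split.
  { intros e He. apply edge_cases in He as [[v [s [Hv [Hs [_ ->]]]]]|[[w [j [Hw [Hj [_ ->]]]]]|[r [u [Hr [Hu [_ ->]]]]]]]; auto;
    simpl; split; try nia. pose proof (div_bound _ _ _ HS Hw). nia. }
  split.
  { intros [v|r|w] Hval Hnil; simpl in Hval.
    - destruct (Hadm (fun _ => 0) v Hval) as [s [Hs [Ha _]]].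
      assert (In (VMin v, VMax (v * Sn GL + s)) (out (GG n F GL) (VMin v))) by (apply out_min; auto; exists s; auto).
      rewrite Hnil in H; destruct H.
    - destruct (Hrand_ex r Hval) as [u [Hu Hp]].
      assert (In (VRand r, VMin u) (out (GG n F GL) (VRand r))) by (apply out_rand; auto; exists u; auto).
      rewrite Hnil in H; destruct H.
    - destruct (eff_exists GL (w mod Sn GL) HK (Nat.mod_upper_bound w (Sn GL) ltac:(lia))) as [j [Hj He]].
      assert (In (VMax w, VRand ((w / Sn GL) * length GL + j)) (out (GG n F GL) (VMax w))) by (apply out_max; auto; exists j; auto).
      rewrite Hnil in H; destruct H. }
  split.
  { intros e He Hr. apply edge_cases in He as [[v [s [Hv [Hs [_ ->]]]]]|[[w [j [Hw [Hj [_ ->]]]]]|[r [u [Hr' [Hu [Hp ->]]]]]]]; auto;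
    simpl in Hr; try contradiction. simpl. apply posq_pos; auto. }
  split.
  { intros r Hr. apply eqR_Qeq. rewrite sumQ_Q2R, (sum_out_rand n F GL r (fun a => Q2R (gq GL a))) by auto. simpl.
    rewrite sumR_filter_zero.
    - destruct (Pv_stoch n GL r HK Hst Hr) as [_ H1]. unfold sum_range in H1. rewrite H1. unfold Q2R; simpl; lra.
    - intros u Hin Hu. apply posq_false in Hu. destruct (Pv_stoch n GL r HK Hst Hr) as [H0 _].
      apply in_seq in Hin. specialize (H0 u ltac:(lia)). lra. }
  split.
  { intros u l Hu Hw Hl Hlast. destruct l as [|w l]; [congruence|]. exists w. split; [left; auto|].
    destruct Hw as [He _]. destruct u; try contradiction.
    apply edge_cases in He as [[v [s [_ [_ [_ He]]]]]|[[w' [jj [_ [_ [_ He]]]]]|[r [u' [_ [_ [_ He]]]]]]]; auto;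
      injection He; intros; subst; simpl; auto; discriminate. }
  split.
  { intros u l Hu Hw Hl Hlast. destruct l as [|w l]; [congruence|]. destruct Hw as [He Hw].
    destruct u; try contradiction.
    assert (Hwr : is_rand w).
    { apply edge_cases in He as [[v [s [_ [_ [_ He]]]]]|[[w' [jj [_ [_ [_ He]]]]]|[r [u' [_ [_ [_ He]]]]]]]; auto;
        injection He; intros; subst; simpl; auto; discriminate. }
    destruct l as [|w2 l].
    - simpl in Hlast. destruct w; contradiction.
    - exists w2. split; [right; left; auto|]. destruct Hw as [He2 _]. destruct w; try contradiction.
      apply edge_cases in He2 as [[v [s [_ [_ [_ He3]]]]]|[[w' [jj [_ [_ [_ He3]]]]]|[r [u' [_ [_ [_ He3]]]]]]]; auto;
        injection He3; intros; subst; simpl; auto; discriminate. }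
  { intros r Hr. destruct (Hrand_ex r Hr) as [u [Hu Hp]]. exists (VMin u :: nil). simpl. split; auto.
    split; auto. apply in_edges; auto. right; right. apply in_randE; auto. exists r, u. auto. }
Qed.


Lemma nstep_abs G k s t : (is_min s \/ is_max s) -> nstep G k s t = if vtx_eqb s t then 1 else 0.
Proof. intros H. destruct k; simpl; auto. destruct s; simpl in H; auto. destruct H; contradiction. Qed.

Lemma Un_cv_ev (u : nat -> R) l N : (forall k, (k >= N)%nat -> u k = l) -> Un_cv u l.
Proof. intros H eps Heps. exists N. intros k Hk. rewrite H by auto. unfold R_dist. rewrite Rminus_diag, Rabs_R0. auto. Qed.

Lemma absorption_GG n F GL : (0 < n)%nat -> (0 < length GL)%nat -> (forall g, In g GL -> stoch n g) ->
  absorption_probs (GG n F GL) (pp GL).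
Proof. intros Hn HK Hst e t He Hvt Hat. pose proof (Sn_pos GL) as HS.
  assert (Habs : forall s, (is_min s \/ is_max s) -> Un_cv (fun k => nstep (GG n F GL) k s t) (pp GL s t)).
  { intros s Hs. apply (Un_cv_ev _ _ 0). intros k _. rewrite nstep_abs by auto.
    destruct s; simpl in Hs; [reflexivity| destruct Hs; contradiction | reflexivity]. }
  apply edge_cases in He as [[v [s [Hv [Hs [_ ->]]]]]|[[w [j [Hw [Hj [_ ->]]]]]|[r [u [Hr [Hu [_ ->]]]]]]]; auto;
    simpl; try solve [apply Habs; simpl; auto].
  set (r := ((w / Sn GL) * length GL + j)%nat).
  assert (Hr : (r < n * length GL)%nat) by (unfold r; pose proof (div_bound _ _ _ HS Hw); nia).
  apply (Un_cv_ev _ _ 1). intros k Hk. destruct k as [|k]; [lia|].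
  change (nstep (GG n F GL) (S k) (VRand r) t) with
    (sumR (map (fun e => Q2R (g_q (GG n F GL) e) * nstep (GG n F GL) k (snd e) t) (out (GG n F GL) (VRand r)))).
  rewrite (sum_out_rand n F GL r (fun e => Q2R (g_q (GG n F GL) e) * nstep (GG n F GL) k (snd e) t)) by auto.
  simpl g_q. cbv beta. simpl snd.
  destruct (Pv_stoch n GL r HK Hst Hr) as [H0 H1].
  rewrite sumR_filter_zero.
  2:{ intros a Ha Hp. apply posq_false in Hp. apply in_seq in Ha. specialize (H0 a ltac:(lia)).
      assert (Q2R (Pv GL r a) = 0) by lra. simpl. rewrite H. ring. }
  change (sumR (map (fun u => Q2R (gq GL (VRand r, VMin u)) * nstep (GG n F GL) k (VMin u) t) (seq 0 n)))
    with (sum_range n (fun u => Q2R (gq GL (VRand r, VMin u)) * nstep (GG n F GL) k (VMin u) t)).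
  simpl gq. fold (sum_range n (fun u => Q2R (Pv GL r u) * nstep (GG n F GL) k (VMin u) t)).
  rewrite (sum_range_ext n _ (fun u => Q2R (Pv GL r u) * (if vtx_eqb (VMin u) t then 1 else 0))).
  2:{ intros i _. rewrite nstep_abs; simpl; auto. }
  destruct t as [u0|r0|w0]; simpl in Hvt, Hat |- *.
  - rewrite (sum_range_ext n _ (fun i => (if Nat.eqb i u0 then 1 else 0) * Q2R (Pv GL r i))) by (intros; ring).
    apply sum_range_delta; auto.
  - destruct Hat; contradiction.
  - apply sum_range_zero. intros; ring.
Qed.


Lemma encoded_GG n F GL : (0 < n)%nat -> (0 < length GL)%nat ->
  (forall x0 v, (v < n)%nat -> exists s, (s < Sn GL)%nat /\ adm n F GL v s = true /\
     forall j, (j < length GL)%nat -> eff GL s j = true -> aff n (gj GL j) x0 v <= F x0 v) ->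
  forall x v, (v < n)%nat -> F x v = encoded_op (GG n F GL) (pp GL) x v.
Proof. intros Hn HK Hadm x v Hv. pose proof (Sn_pos GL) as HS.
  set (G := GG n F GL).
  set (fmax := fun w => maxl (map (fun e' => g_r G e' + sum_range (g_n G) (fun u => pp GL (snd e') (VMin u) * x u))
                                    (out G (VMax w)))).
  assert (Hin_max : forall w y, (w < n * Sn GL)%nat ->
     In y (map (fun e' => g_r G e' + sum_range (g_n G) (fun u => pp GL (snd e') (VMin u) * x u)) (out G (VMax w))) <->
     exists j, (j < length GL)%nat /\ eff GL (w mod Sn GL) j = true /\ y = aff n (gj GL j) x (w / Sn GL)).
  { intros w y Hw. rewrite in_map_iff. split.
    - intros [e' [<- He']]. apply out_max in He' as [j [Hj [He ->]]]; auto. exists j. repeat split; auto.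
      destruct (dm_enc (length GL) (w / Sn GL) j Hj) as [E1 E2].
      simpl. unfold aff, cv, Pv. rewrite E1, E2. reflexivity.
    - intros [j [Hj [He ->]]]. exists (VMax w, VRand ((w / Sn GL) * length GL + j)). split.
      + destruct (dm_enc (length GL) (w / Sn GL) j Hj) as [E1 E2].
        simpl. unfold aff, cv, Pv. rewrite E1, E2. reflexivity.
      + apply out_max; auto. exists j. auto. }
  assert (Hcomp : forall s, (s < Sn GL)%nat ->
     g_r G (VMin v, VMax (v * Sn GL + s)) + sum_range (g_m G) (fun w => pp GL (snd (VMin v, VMax (v * Sn GL + s))) (VMax w) * fmax w) = fmax (v * Sn GL + s)%nat).
  { intros s Hs. simpl. rewrite Rplus_0_l.
    rewrite (sum_range_ext _ _ (fun w => (if Nat.eqb w (v * Sn GL + s) then 1 else 0) * fmax w)).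
    - apply sum_range_delta. nia.
    - intros i _. rewrite Nat.eqb_sym. reflexivity. }
  assert (Hge : forall s, (s < Sn GL)%nat -> adm n F GL v s = true -> F x v <= fmax (v * Sn GL + s)%nat).
  { intros s Hs Ha. unfold adm in Ha. destruct (excluded_middle_informative _) as [Hp|_]; [|discriminate].
    destruct (Hp x) as [j [Hj [He Hle]]]. eapply Rle_trans; [apply Hle|]. unfold fmax. apply maxl_ge.
    apply Hin_max; [nia|]. destruct (dm_enc (Sn GL) v s Hs) as [E1 E2]. rewrite E1, E2. exists j. auto. }
  destruct (Hadm x v Hv) as [s0 [Hs0 [Ha0 Hle0]]].
  assert (Heq0 : fmax (v * Sn GL + s0)%nat = F x v).
  { apply Rle_antisym; [|apply Hge; auto].
    destruct (dm_enc (Sn GL) v s0 Hs0) as [E1 E2].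
    destruct (eff_exists GL s0 HK Hs0) as [j1 [Hj1 He1]].
    assert (Hne : map (fun e' => g_r G e' + sum_range (g_n G) (fun u => pp GL (snd e') (VMin u) * x u))
                      (out G (VMax (v * Sn GL + s0))) <> nil).
    { intros Hnil. assert (Hc : In (aff n (gj GL j1) x v) (@nil R)).
      { rewrite <- Hnil. apply Hin_max; [nia|]. rewrite E1, E2. exists j1. auto. }
      destruct Hc. }
    pose proof (maxl_in _ Hne) as Hm. apply Hin_max in Hm; [|nia]. rewrite E1, E2 in Hm.
    destruct Hm as [j [Hj [He Hmj]]]. unfold fmax. rewrite Hmj. apply Hle0; auto. }
  unfold encoded_op. fold G.
  set (L := map (fun e => g_r G e + sum_range (g_m G) (fun w => pp GL (snd e) (VMax w) *
        maxl (map (fun e' => g_r G e' + sum_range (g_n G) (fun u => pp GL (snd e') (VMin u) * x u)) (out G (VMax w)))))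
     (out G (VMin v))).
  assert (HinL : forall y, In y L -> exists s, (s < Sn GL)%nat /\ adm n F GL v s = true /\ y = fmax (v * Sn GL + s)%nat).
  { intros y Hy. unfold L in Hy. apply in_map_iff in Hy as [e [<- He]].
    apply out_min in He as [s [Hs [Ha ->]]]; auto. exists s. split; [auto|split; [auto|]]. rewrite <- (Hcomp s Hs). reflexivity. }
  assert (Hy0 : In (fmax (v * Sn GL + s0)%nat) L).
  { unfold L. apply in_map_iff. exists (VMin v, VMax (v * Sn GL + s0)). split.
    - rewrite <- (Hcomp s0 Hs0). reflexivity.
    - apply out_min; auto. exists s0. auto. }
  apply Rle_antisym.
  - assert (Hne : L <> nil) by (intros Hn0; rewrite Hn0 in Hy0; destruct Hy0).
    destruct (HinL _ (minl_in L Hne)) as [s [Hs [Ha ->]]]. apply Hge; auto.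
  - rewrite <- Heq0. apply minl_le. auto.
Qed.


Theorem mainTheorem12 (n : nat) (F : (nat -> R) -> (nat -> R)) :
  (0 < n)%nat -> is_map_Rn n F -> semilinear n F -> monotone n F -> homogeneous n F ->
  exists (G : game) (p : vtx -> vtx -> R),
    g_n G = n /\ game_ok G /\ absorption_probs G p /\
    forall x v, (v < n)%nat -> F x v = encoded_op G p x v.
Proof.
  intros Hn Hmap [S HS] Hm Hh.
  destruct (GL_exists n F S Hm Hh HS) as [GL [Hst HGL]].
  pose proof (selection n F S GL Hm Hh HS HGL) as Hsel.
  pose proof (segment n F GL Hmap Hm Hh Hsel) as Hseg.
  assert (HK : (0 < length GL)%nat).
  { destruct (Hsel (fun _ => 0) 0%nat Hn) as [g [Hg _]]. destruct GL; [destruct Hg|]. simpl; lia. }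
  pose proof (adm_exists n F GL Hsel Hseg) as Hadm.
  exists (GG n F GL), (pp GL). split; [reflexivity|]. split; [apply game_ok_GG; auto|].
  split; [apply absorption_GG; auto|]. apply encoded_GG; auto.
Qed.
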